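(* Let $G$ be a finitely generated group, $H$ a finitely generated subgroup, $A$ a finite alphabet, $S\subseteq H$ finite and $\mu:A^S\to A$. Let $\Phi_H:A^H\to A^H$ and $\Phi_G:A^G\to A^G$ be the cellular automata defined by $\Phi_H(x)(h)=\mu(s\mapsto x(hs))$ and $\Phi_G(x)(g)=\mu(s\mapsto x(gs))$. If $\Phi_G$ is sensitive to initial conditions, then so is $\Phi_H$.
   Context: Metrics: fix a finite generating set $E_H$ of $H$ closed under inverses and a finite generating set $D\supseteq E_H$ of $G$ closed under inverses, with word metrics $d_H$, $d_G$. The Cantor metric on $A^H$ is $d^H(x,y)=2^{-k}$ with $k=\min\{d_H(1,h):x(h)\neq y(h)\}$, and on $A^G$ similarly $d^G$ using $d_G$; $B^H$, $B^G$ denote closed balls. A map $\Phi$ on such a space with balls $B$ is sensitive to initial conditions if $\exists\epsilon>0\,\forall x\,\forall\delta>0\,\exists t\in\mathbb{N}\,\exists y\in B(x,\delta)$ with $\Phi^t(y)\notin B(\Phi^t(x),\epsilon)$. (This notion does not depend on the choice of generating sets.) *)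

(* Defs.v *)
From Stdlib Require Import Reals List ClassicalEpsilon.
Open Scope R_scope.

Record group := Group {
  carrier :> Type;
  gmul : carrier -> carrier -> carrier;
  ginv : carrier -> carrier;
  gone : carrier;
  gmulA : forall a b c, gmul a (gmul b c) = gmul (gmul a b) c;
  gmul1 : forall a, gmul gone a = a;
  gmulV : forall a, gmul (ginv a) a = gone }.

Arguments gmul {g}.
Arguments ginv {g}.
Arguments gone {g}.

Definition inv_closed {G : group} (E : list G) : Prop :=
  forall s, In s E -> In (ginv s) E.

Definition wordlen_le {G : group} (E : list G) (g : G) (n : nat) : Prop :=
  exists l : list G, (length l <= n)%nat /\ (forall s, In s l -> In s E) /\
    g = fold_right gmul gone l.

(* E generates G (as a monoid; for inverse-closed E, this is generation as a group). *)
Definition generates {G : group} (E : list G) : Prop :=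
  forall g, exists n, wordlen_le E g n.

(* Least natural number satisfying P (0 if none exists). *)
Definition nat_min (P : nat -> Prop) : nat :=
  epsilon (inhabits 0%nat) (fun n => P n /\ forall m, P m -> (n <= m)%nat).

Definition word_len {G : group} (E : list G) (g : G) : nat :=
  nat_min (wordlen_le E g).

Definition cantor_dist {X A : Type} (wl : X -> nat) (x y : X -> A) : R :=
  if excluded_middle_informative (exists h, x h <> y h)
  then (/ 2) ^ (nat_min (fun k => exists h, wl h = k /\ x h <> y h))
  else 0.

Definition sensitive {X : Type} (d : X -> X -> R) (Phi : X -> X) : Prop :=
  exists eps, eps > 0 /\
    forall x delta, delta > 0 ->
      exists (t : nat) (y : X), d x y <= delta /\
        ~ (d (Nat.iter t Phi x) (Nat.iter t Phi y) <= eps).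

Definition CA_H {H : group} {A : Type} (S : list H)
  (mu : ({s : H | In s S} -> A) -> A) (x : H -> A) : H -> A :=
  fun h => mu (fun s => x (gmul h (proj1_sig s))).

Definition CA_G {G H : group} (iota : H -> G) {A : Type} (S : list H)
  (mu : ({s : H | In s S} -> A) -> A) (x : G -> A) : G -> A :=
  fun g => mu (fun s => x (gmul g (iota (proj1_sig s)))).

(* Main.v *)
Require Import Defs.
From Stdlib Require Import Reals List.
From Stdlib Require Import Classical ClassicalEpsilon FunctionalExtensionality PropExtensionality Lia Arith Lra.
Open Scope R_scope.

Lemma gmulV_r (G : group) (a : G) : gmul a (ginv a) = gone.
Proof.
  set (b := ginv a).
  transitivity (gmul (gmul (ginv b) b) (gmul a b)).
  { rewrite gmulV, gmul1; reflexivity. }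
  rewrite <- gmulA. rewrite (gmulA _ b a b). unfold b.
  rewrite gmulV, gmul1. apply gmulV.
Qed.

Lemma gmul1_r (G : group) (a : G) : gmul a gone = a.
Proof. rewrite <- (gmulV _ a). rewrite gmulA, gmulV_r, gmul1. reflexivity. Qed.

Lemma gcancel_l (G : group) (a b c : G) : gmul a b = gmul a c -> b = c.
Proof.
  intro E. rewrite <- (gmul1 _ b), <- (gmul1 _ c), <- (gmulV _ a), <- !gmulA, E.
  reflexivity.
Qed.

Lemma ginv_mul_l (G : group) (a z : G) : gmul (ginv a) (gmul a z) = z.
Proof. rewrite gmulA, gmulV, gmul1. reflexivity. Qed.

Lemma iota_one (G H : group) (iota : H -> G)
  (iota_mul : forall a b : H, iota (gmul a b) = gmul (iota a) (iota b)) :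
  iota gone = gone.
Proof.
  apply (gcancel_l _ (iota gone)). rewrite <- iota_mul, gmul1, gmul1_r. reflexivity.
Qed.

Lemma fold_app (G : group) (l1 l2 : list G) :
  fold_right gmul gone (l1 ++ l2) =
  gmul (fold_right gmul gone l1) (fold_right gmul gone l2).
Proof.
  induction l1 as [|a l1 IH]; simpl.
  - rewrite gmul1; reflexivity.
  - rewrite IH, gmulA. reflexivity.
Qed.

Lemma ex_min (P : nat -> Prop) n : P n -> exists m, P m /\ forall k, P k -> (m <= k)%nat.
Proof.
  revert n. intro n. induction n as [n IH] using lt_wf_ind. intro Pn.
  destruct (classic (exists k, (k < n)%nat /\ P k)) as [[k [Hk Pk]]|Hno].
  - exact (IH k Hk Pk).
  - exists n. split; auto. intros k Pk. destruct (le_lt_dec n k); auto.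
    exfalso; apply Hno; eauto.
Qed.

Lemma nat_min_spec (P : nat -> Prop) n : P n ->
  P (nat_min P) /\ forall m, P m -> (nat_min P <= m)%nat.
Proof. intro Hn. unfold nat_min. apply epsilon_spec. exact (ex_min P n Hn). Qed.

Lemma wl_mono (G : group) (E : list G) g n m :
  wordlen_le E g n -> (n <= m)%nat -> wordlen_le E g m.
Proof. intros [l [Hl [Hi He]]] Hnm. exists l. repeat split; auto. lia. Qed.

Lemma wl_mul (G : group) (E : list G) a b n m :
  wordlen_le E a n -> wordlen_le E b m -> wordlen_le E (gmul a b) (n + m).
Proof.
  intros [l1 [H1 [I1 E1]]] [l2 [H2 [I2 E2]]]. exists (l1 ++ l2). repeat split.
  - rewrite length_app. lia.
  - intros s Hs. apply in_app_iff in Hs. destruct Hs; auto.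
  - rewrite fold_app, E1, E2. reflexivity.
Qed.

Lemma wl_iota (G H : group) (iota : H -> G)
  (iota_mul : forall a b : H, iota (gmul a b) = gmul (iota a) (iota b))
  (E : list H) (D : list G) (D_sup : forall s, In s E -> In (iota s) D) h n :
  wordlen_le E h n -> wordlen_le D (iota h) n.
Proof.
  intros [l [Hl [Hi He]]]. exists (map iota l). repeat split.
  - rewrite length_map. auto.
  - intros s Hs. apply in_map_iff in Hs. destruct Hs as [x [<- Hx]]. auto.
  - subst h. clear Hl Hi. induction l as [|a l IH]; simpl.
    + apply iota_one; auto.
    + rewrite iota_mul, IH. reflexivity.
Qed.

Lemma WL1 (G : group) (E : list G) (Eg : generates E) g : wordlen_le E g (word_len E g).
Proof. destruct (Eg g) as [n Hn]. exact (proj1 (nat_min_spec _ n Hn)). Qed.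

Lemma WL2 (G : group) (E : list G) g n : wordlen_le E g n -> (word_len E g <= n)%nat.
Proof. intro Hn. exact (proj2 (nat_min_spec _ n Hn) n Hn). Qed.

Lemma len_mul (G : group) (E : list G) (Eg : generates E) a b :
  (word_len E (gmul a b) <= word_len E a + word_len E b)%nat.
Proof. apply WL2, wl_mul; apply WL1; auto. Qed.

Lemma len_iota (G H : group) (iota : H -> G)
  (iota_mul : forall a b : H, iota (gmul a b) = gmul (iota a) (iota b))
  (E : list H) (D : list G) (D_sup : forall s, In s E -> In (iota s) D)
  (Eg : generates E) h :
  (word_len D (iota h) <= word_len E h)%nat.
Proof. apply WL2. eapply wl_iota; eauto. apply WL1; auto. Qed.

Lemma ball_fin (G : group) (D : list G) k :
  exists l, forall g, wordlen_le D g k -> In g l.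
Proof.
  induction k as [|k [lk Hk]].
  - exists (gone :: nil). intros g [l [Hl [_ ->]]].
    destruct l; simpl in Hl; [left; reflexivity | lia].
  - exists (lk ++ flat_map (fun d => map (gmul d) lk) D).
    intros g [l [Hl [Hin ->]]]. destruct l as [|d l].
    + apply in_or_app; left; apply Hk. exists nil; simpl; repeat split; auto. lia.
    + apply in_or_app; right. apply in_flat_map. exists d. split.
      * apply Hin; left; auto.
      * simpl. apply in_map. apply Hk. exists l. simpl in Hl. repeat split.
        -- lia.
        -- intros s Hs; apply Hin; right; auto.
Qed.

Lemma bound_fin (G H : group) (iota : H -> G)
  (iota_inj : forall a b : H, iota a = iota b -> a = b) (E : list H) (L : list G) :
  exists K, forall h, In (iota h) L -> (word_len E h <= K)%nat.
Proof.
  induction L as [|a L [K HK]].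
  - exists 0%nat; intros h [].
  - destruct (classic (exists h, iota h = a)) as [[ha Ha]|Hn].
    + exists (Nat.max K (word_len E ha)). intros h [Eh|Hh].
      * rewrite <- Ha in Eh. apply iota_inj in Eh. subst. lia.
      * specialize (HK h Hh). lia.
    + exists K. intros h [Eh|Hh]; [exfalso; apply Hn; eauto | auto].
Qed.

Lemma half_pow_pos n : 0 < (/2)^n.
Proof. apply pow_lt; lra. Qed.

Lemma half_pow_anti a b : (a <= b)%nat -> (/2)^b <= (/2)^a.
Proof.
  intro Hab. replace b with (a + (b - a))%nat by lia. rewrite pow_add.
  assert ((/2)^(b-a) <= 1).
  { induction (b - a)%nat as [|c IH]; simpl; [lra|].
    assert (0 < (/2)^c) by apply half_pow_pos. lra. }
  pose proof (half_pow_pos a). nra.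
Qed.

Lemma half_pow_strict a b : (a < b)%nat -> (/2)^b < (/2)^a.
Proof.
  intro Hab. apply Rle_lt_trans with ((/2)^(S a)).
  - apply half_pow_anti; lia.
  - simpl. pose proof (half_pow_pos a). lra.
Qed.

Lemma half_pow_small e : e > 0 -> exists k, (/2)^k <= e.
Proof.
  intro He. destruct (pow_lt_1_zero (/2)) with e as [k Hk]; auto.
  { rewrite Rabs_pos_eq; lra. }
  exists k. specialize (Hk k (le_n k)). rewrite Rabs_pos_eq in Hk.
  - lra.
  - left; apply half_pow_pos.
Qed.

Lemma cd_small {X A : Type} (wl : X -> nat) (x y : X -> A) m :
  (forall h, (wl h < m)%nat -> x h = y h) -> cantor_dist wl x y <= (/2)^m.
Proof.
  intro Hag. unfold cantor_dist.
  destruct (excluded_middle_informative _) as [[h0 Hh0]|ne].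
  - destruct (nat_min_spec (fun k => exists h, wl h = k /\ x h <> y h) (wl h0)
      (ex_intro _ h0 (conj eq_refl Hh0))) as [[h [Eh Dh]] _].
    apply half_pow_anti. destruct (le_lt_dec m (wl h)) as [l|l].
    + lia.
    + exfalso. apply Dh. apply Hag. auto.
  - left; apply half_pow_pos.
Qed.

Lemma cd_agree {X A : Type} (wl : X -> nat) (x y : X -> A) n :
  cantor_dist wl x y <= (/2)^n -> forall h, (wl h < n)%nat -> x h = y h.
Proof.
  intros Hd h Hh. apply NNPP. intro Hne. revert Hd. unfold cantor_dist.
  destruct (excluded_middle_informative _) as [e|ne].
  - destruct (nat_min_spec (fun k => exists h, wl h = k /\ x h <> y h) (wl h)
      (ex_intro _ h (conj eq_refl Hne))) as [_ Hmin].
    specialize (Hmin (wl h) (ex_intro _ h (conj eq_refl Hne))).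
    pose proof (half_pow_strict (nat_min (fun k => exists h, wl h = k /\ x h <> y h)) n ltac:(lia)). lra.
  - exfalso; apply ne; eauto.
Qed.

Lemma cd_far {X A : Type} (wl : X -> nat) (x y : X -> A) k :
  ~ (cantor_dist wl x y <= (/2)^k) -> exists h, (wl h < k)%nat /\ x h <> y h.
Proof.
  unfold cantor_dist. destruct (excluded_middle_informative _) as [[h0 Hh0]|ne].
  - destruct (nat_min_spec (fun k => exists h, wl h = k /\ x h <> y h) (wl h0)
      (ex_intro _ h0 (conj eq_refl Hh0))) as [[h [Eh Dh]] _].
    intro Hn. exists h. split; auto. destruct (le_lt_dec k (wl h)) as [l|l]; auto.
    exfalso. apply Hn. rewrite <- Eh. apply half_pow_anti. auto.
  - intro Hn. exfalso. apply Hn. left; apply half_pow_pos.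
Qed.

Lemma cd_lower {X A : Type} (wl : X -> nat) (x y : X -> A) h K :
  (wl h <= K)%nat -> x h <> y h -> ~ (cantor_dist wl x y <= (/2)^(S K)).
Proof.
  intros Hh Hne. unfold cantor_dist. destruct (excluded_middle_informative _) as [e|ne].
  - destruct (nat_min_spec (fun k => exists h, wl h = k /\ x h <> y h) (wl h)
      (ex_intro _ h (conj eq_refl Hne))) as [_ Hmin].
    specialize (Hmin (wl h) (ex_intro _ h (conj eq_refl Hne))).
    pose proof (half_pow_strict (nat_min (fun k => exists h, wl h = k /\ x h <> y h)) (S K) ltac:(lia)). lra.
  - exfalso; apply ne; eauto.
Qed.

Definition same {G H : group} (iota : H -> G) (g r : G) : Prop :=
  exists h, r = gmul g (iota h).

Definition rep {G H : group} (iota : H -> G) (D : list G) (g : G) : G :=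
  epsilon (inhabits gone) (fun r => same iota g r /\
    forall r', same iota g r' -> (word_len D r <= word_len D r')%nat).

Definition tau {G H : group} (iota : H -> G) (D : list G) (g : G) : H :=
  epsilon (inhabits gone) (fun h => g = gmul (rep iota D g) (iota h)).

Lemma same_refl (G H : group) (iota : H -> G)
  (iota_mul : forall a b : H, iota (gmul a b) = gmul (iota a) (iota b)) g :
  same iota g g.
Proof. exists gone. rewrite iota_one, gmul1_r; auto. Qed.

Lemma same_tr (G H : group) (iota : H -> G)
  (iota_mul : forall a b : H, iota (gmul a b) = gmul (iota a) (iota b)) g g' r :
  same iota g g' -> same iota g' r -> same iota g r.
Proof.
  intros [h1 ->] [h ->]. exists (gmul h1 h). rewrite iota_mul, gmulA. reflexivity.
Qed.

Lemma same_sym (G H : group) (iota : H -> G)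
  (iota_mul : forall a b : H, iota (gmul a b) = gmul (iota a) (iota b)) g g' :
  same iota g g' -> same iota g' g.
Proof.
  intros [h1 ->]. exists (ginv h1). rewrite <- gmulA, <- iota_mul, gmulV_r, iota_one, gmul1_r;
  auto.
Qed.

Lemma rep_spec (G H : group) (iota : H -> G)
  (iota_mul : forall a b : H, iota (gmul a b) = gmul (iota a) (iota b)) D g :
  same iota g (rep iota D g) /\
  forall r', same iota g r' -> (word_len D (rep iota D g) <= word_len D r')%nat.
Proof.
  unfold rep. apply epsilon_spec.
  destruct (ex_min (fun n => exists r, same iota g r /\ word_len D r = n) (word_len D g))
    as [m [[r [Sr Er]] Hmin]].
  { exists g. split; auto. apply same_refl; auto. }
  exists r. split; auto. intros r' Sr'. rewrite Er. apply Hmin. eauto.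
Qed.

Lemma rep_const (G H : group) (iota : H -> G)
  (iota_mul : forall a b : H, iota (gmul a b) = gmul (iota a) (iota b)) D g g' :
  same iota g g' -> rep iota D g = rep iota D g'.
Proof.
  intro S. unfold rep. f_equal. apply functional_extensionality. intro r.
  apply propositional_extensionality.
  assert (forall z, same iota g z <-> same iota g' z).
  { intro z; split; intro Hz.
    - apply same_tr with g; auto. apply same_sym; auto.
    - apply same_tr with g'; auto. }
  split; intros [S1 S2]; split.
  - apply H0; auto.
  - intros r' Hr'. apply S2. apply H0; auto.
  - apply H0; auto.
  - intros r' Hr'. apply S2. apply H0; auto.
Qed.

Lemma tau_spec (G H : group) (iota : H -> G)
  (iota_mul : forall a b : H, iota (gmul a b) = gmul (iota a) (iota b)) D z :
  z = gmul (rep iota D z) (iota (tau iota D z)).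
Proof.
  unfold tau. apply (epsilon_spec (inhabits gone)
    (fun h => z = gmul (rep iota D z) (iota h))).
  destruct (rep_spec G H iota iota_mul D z) as [Sz _].
  apply same_sym in Sz; [|exact iota_mul]. destruct Sz as [h Hh]. exists h. exact Hh.
Qed.

Lemma tau_key (G H : group) (iota : H -> G)
  (iota_mul : forall a b : H, iota (gmul a b) = gmul (iota a) (iota b))
  (iota_inj : forall a b : H, iota a = iota b -> a = b) D g h :
  tau iota D (gmul (rep iota D g) (iota h)) = h.
Proof.
  set (z := gmul (rep iota D g) (iota h)).
  assert (Er : rep iota D z = rep iota D g).
  { symmetry. apply rep_const; auto. apply same_tr with (rep iota D g); auto.
    - apply (rep_spec G H iota iota_mul D g).
    - exists h; reflexivity. }
  pose proof (tau_spec G H iota iota_mul D z) as T.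
  rewrite Er in T. unfold z in T at 1. apply gcancel_l in T. apply iota_inj in T.
  symmetry; exact T.
Qed.

Lemma CA_equiv (G H : group) (iota : H -> G)
  (iota_mul : forall a b : H, iota (gmul a b) = gmul (iota a) (iota b))
  {A : Type} (S : list H) (mu : ({s : H | In s S} -> A) -> A) (Z : G -> A) r h :
  CA_G iota S mu Z (gmul r (iota h)) = CA_H S mu (fun h' => Z (gmul r (iota h'))) h.
Proof.
  unfold CA_G, CA_H. f_equal. apply functional_extensionality. intro s.
  rewrite iota_mul, gmulA. reflexivity.
Qed.

Lemma iter_equiv (G H : group) (iota : H -> G)
  (iota_mul : forall a b : H, iota (gmul a b) = gmul (iota a) (iota b))
  {A : Type} (S : list H) (mu : ({s : H | In s S} -> A) -> A) t :
  forall (Z : G -> A) r h,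
  Nat.iter t (CA_G iota S mu) Z (gmul r (iota h)) =
  Nat.iter t (CA_H S mu) (fun h' => Z (gmul r (iota h'))) h.
Proof.
  induction t as [|t IH]; intros Z r h; cbn [Nat.iter]; auto.
  change (CA_G iota S mu (Nat.iter t (CA_G iota S mu) Z) (gmul r (iota h)) = CA_H S mu (Nat.iter t (CA_H S mu) (fun h' => Z (gmul r (iota h')))) h). rewrite CA_equiv; auto. f_equal. apply functional_extensionality. intro; apply IH.
Qed.

Theorem proposition6
  (G H : group) (iota : H -> G)
  (iota_mul : forall a b : H, iota (gmul a b) = gmul (iota a) (iota b))
  (iota_inj : forall a b : H, iota a = iota b -> a = b)
  (E_H : list H) (E_H_inv : inv_closed E_H) (E_H_gen : generates E_H)
  (D : list G) (D_inv : inv_closed D) (D_gen : generates D)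
  (D_sup : forall s, In s E_H -> In (iota s) D)
  (A : Type) (A_fin : exists l : list A, forall a, In a l)
  (S : list H) (mu : ({s : H | In s S} -> A) -> A) :
  sensitive (cantor_dist (word_len D)) (CA_G iota S mu) ->
  sensitive (cantor_dist (word_len E_H)) (CA_H S mu).
Proof.
  intros [epsG [HepsG HG]].
  destruct (half_pow_small epsG HepsG) as [k Hk].
  assert (HK : exists K, forall h r g, (word_len D r <= k)%nat -> (word_len D g <= k)%nat ->
            gmul r (iota h) = g -> (word_len E_H h <= K)%nat).
  { destruct (ball_fin G D k) as [lk Hlk].
    destruct (bound_fin G H iota iota_inj E_H
      (flat_map (fun r => map (fun g => gmul (ginv r) g) lk) lk)) as [K HK].
    exists K. intros h r g Hr Hg Eq. apply HK. apply in_flat_map. exists r. split.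
    - apply Hlk. apply wl_mono with (word_len D r); auto. apply WL1; auto.
    - apply in_map_iff. exists g. split.
      + subst g. apply ginv_mul_l.
      + apply Hlk. apply wl_mono with (word_len D g); auto. apply WL1; auto. }
  destruct HK as [K HK].
  exists ((/2)^(Datatypes.S K)). split; [apply half_pow_pos|].
  intros x delta Hdelta.
  destruct (half_pow_small delta Hdelta) as [m Hm].
  set (X := fun z => x (tau iota D z)).
  destruct (HG X ((/2)^(k+m)) (half_pow_pos _)) as [t [Y [HXY Hfar]]].
  assert (Hfar' : ~ (cantor_dist (word_len D) (Nat.iter t (CA_G iota S mu) X)
                     (Nat.iter t (CA_G iota S mu) Y) <= (/2)^k)).
  { intro C; apply Hfar; lra. }
  destruct (cd_far _ _ _ _ Hfar') as [g [Hg Hdiff]].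
  set (r := rep iota D g).
  assert (Hr : (word_len D r <= word_len D g)%nat).
  { apply (rep_spec G H iota iota_mul D g). apply same_refl; auto. }
  set (h0 := tau iota D g).
  assert (Eg : g = gmul r (iota h0)) by apply tau_spec, iota_mul.
  assert (Ex : x = fun h => X (gmul r (iota h))).
  { apply functional_extensionality. intro h. unfold X, r. rewrite tau_key; auto. }
  exists t, (fun h => Y (gmul r (iota h))). split.
  - apply Rle_trans with ((/2)^m); auto. apply cd_small. intros h Hh.
    rewrite Ex. apply (cd_agree _ _ _ _ HXY).
    pose proof (len_mul G D D_gen r (iota h)).
    pose proof (len_iota G H iota iota_mul E_H D D_sup E_H_gen h). lia.
  - apply (cd_lower _ _ _ h0 K).
    + apply HK with r g; try lia. symmetry; auto.
    + rewrite Ex. rewrite <- !iter_equiv by auto. rewrite <- Eg. exact Hdiff.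
Qed.
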